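(* Let $\lambda_1,\lambda_2$ and $H$ be as in the context. For every $c>0$ there exists a unique $\widetilde{\theta_c}\in(0,\frac{\pi}{2})\cap(0,\theta_c^+)$ such that $H(c,\widetilde{\theta_c})=0$.
   Context: Either $\lambda_1>\lambda_2>0$ or $\lambda_1=\lambda_2=1$. For $c>0$ put $\theta_c^+=\pi$ if $c>\sqrt2\lambda_1$ and $\theta_c^+=\arccos(1-c^2/\lambda_1^2)$ if $0<c\le\sqrt2\lambda_1$; $\Omega=\{(c,\theta): c>0,\ |\theta|<\theta_c^+\}$. For $(c,\theta)\in\Omega$: $D=\sin\theta/c$; $\varphi$ is the global solution of $\varphi'(u)=\sqrt{c^2+2\cos\theta\,B(u)-D^2B(u)^2}$, $\varphi(0)=0$, where $B(u)=\lambda_1^2\cos^2\varphi(u)+\lambda_2^2\sin^2\varphi(u)$; $U>0$ is the unique number with $\varphi(U)=\pi$; $f$ solves $f'(u)=DB(u)$, $f(0)=0$; $G(u)=\int_0^u\frac{c-\varphi'(s)}{B(s)}ds$; and $H(c,\theta)=Df(U)+cG(U)$. *)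

(* Defs.v *)
From Stdlib Require Import Reals ClassicalEpsilon.
From Coquelicot Require Import Coquelicot.
Open Scope R_scope.

Definition theta_plus (l1 c : R) : R :=
  if Rlt_dec (sqrt 2 * l1) c then PI else acos (1 - c ^ 2 / l1 ^ 2).

Definition in_Omega (l1 c th : R) : Prop := 0 < c /\ Rabs th < theta_plus l1 c.

Definition Dc (c th : R) : R := sin th / c.

(* B as a function of the angle: B(u) = Bang (phi u) *)
Definition Bang (l1 l2 x : R) : R := l1 ^ 2 * (cos x) ^ 2 + l2 ^ 2 * (sin x) ^ 2.

Definition phi_rhs (l1 l2 c th x : R) : R :=
  sqrt (c ^ 2 + 2 * cos th * Bang l1 l2 x - (Dc c th) ^ 2 * (Bang l1 l2 x) ^ 2).

Definition is_phi (l1 l2 c th : R) (phi : R -> R) : Prop :=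
  phi 0 = 0 /\ forall u, is_derive phi u (phi_rhs l1 l2 c th (phi u)).

(* "the" global solution (chosen by description; it is unique in Omega) *)
Definition phi (l1 l2 c th : R) : R -> R :=
  epsilon (inhabits (fun _ => 0)) (is_phi l1 l2 c th).

Definition Bfun (l1 l2 c th : R) (u : R) : R := Bang l1 l2 (phi l1 l2 c th u).

Definition phi' (l1 l2 c th : R) (u : R) : R := phi_rhs l1 l2 c th (phi l1 l2 c th u).

Definition Ucap (l1 l2 c th : R) : R :=
  epsilon (inhabits 0) (fun U => 0 < U /\ phi l1 l2 c th U = PI).

(* f solves f' = D B, f(0) = 0, i.e. f(u) = int_0^u D B(s) ds *)
Definition ffun (l1 l2 c th : R) (u : R) : R :=
  RInt (fun s => Dc c th * Bfun l1 l2 c th s) 0 u.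

Definition Gfun (l1 l2 c th : R) (u : R) : R :=
  RInt (fun s => (c - phi' l1 l2 c th s) / Bfun l1 l2 c th s) 0 u.

Definition Hfun (l1 l2 c th : R) : R :=
  Dc c th * ffun l1 l2 c th (Ucap l1 l2 c th) + c * Gfun l1 l2 c th (Ucap l1 l2 c th).

(* Main.v *)
Require Import Defs.
From Stdlib Require Import Reals Lra Psatz ClassicalEpsilon.
From Coquelicot Require Import Coquelicot.
Open Scope R_scope.

Definition Qk (c k B : R) := c^2 + 2*k*B - (1-k^2)/c^2 * B^2.
Definition Kk (c k B : R) := ((1-k^2)/c^2 * B + c^2/B) / sqrt (Qk c k B) - c / B.
Definition Gk l1 l2 c k := RInt (fun x => Kk c k (Bang l1 l2 x)) 0 PI.
Definition goodk l1 c k := 0 < k < 1 /\ (1-k)*l1^2 < c^2.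

Lemma sc2 x : sin x ^ 2 + cos x ^ 2 = 1.
Proof. rewrite <- (sin2_cos2 x). unfold Rsqr. ring. Qed.

Lemma Bang_bounds l1 l2 x : 0 < l2 <= l1 ->
  l2^2 <= Bang l1 l2 x <= l1^2.
Proof.
  intros H. unfold Bang. pose proof (sc2 x).
  assert (l2^2 <= l1^2) by nra.
  split; nra.
Qed.

Lemma Qk_lower c k B l1 : 0 < c -> -1 <= k <= 1 -> 0 < B <= l1^2 ->
  0 < c^2 - (1-k)*l1^2 -> c^2 - (1-k)*l1^2 <= Qk c k B.
Proof.
  intros Hc Hk HB Hq.
  assert (E: Qk c k B = (c^2 - (1-k)*B) + (1+k)*B*(c^2-(1-k)*B)/c^2).
  { unfold Qk. field. lra. }
  rewrite E.
  assert (0 <= (1+k)*B*(c^2-(1-k)*B)/c^2).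
  { apply Rmult_le_pos. apply Rmult_le_pos. nra. nra. 
    apply Rlt_le, Rinv_0_lt_compat. nra. }
  nra.
Qed.

Lemma Qk_upper c k B : 0 < c -> -1 <= k <= 1 -> 0 <= B -> Qk c k B <= c^2 + 2*B.
Proof.
  intros Hc Hk HB. unfold Qk.
  assert (0 <= (1-k^2)/c^2 * B^2).
  { apply Rmult_le_pos. apply Rmult_le_pos. nra. apply Rlt_le, Rinv_0_lt_compat. nra. nra. }
  nra.
Qed.

Lemma phi_rhs_eq l1 l2 c th x : 0 < c ->
  phi_rhs l1 l2 c th x = sqrt (Qk c (cos th) (Bang l1 l2 x)).
Proof.
  intros Hc. unfold phi_rhs, Qk, Dc. f_equal.
  pose proof (sc2 th). replace (sin th ^2) with (1 - cos th ^2) by lra.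
  replace ((sin th / c)^2) with (sin th ^2 / c^2) by (field; lra).
  replace (sin th ^2) with (1 - cos th ^2) by lra. ring.
Qed.

Lemma Kk_sign_id c k B : 0 < c -> 0 < B ->
  c^2 * Qk c k B - ((1-k^2)/c^2 * B^2 + c^2)^2 =
  B * (2*k*c^2 - 3*((1-k^2)/c^2)*c^2*B - ((1-k^2)/c^2)^2*B^3).
Proof. intros. unfold Qk. field. lra. Qed.

Lemma Kk_nonpos c k B : 0 < c -> 0 < B -> 0 < Qk c k B -> -1 <= k <= 1 ->
  ((1-k^2)/c^2)^2*B^3 + 3*((1-k^2)/c^2)*c^2*B <= 2*k*c^2 -> Kk c k B <= 0.
Proof.
  intros Hc HB HQ Hk H.
  set (a := (1-k^2)/c^2) in *.
  assert (Ha: 0 <= a). { unfold a. apply Rmult_le_pos. nra. apply Rlt_le, Rinv_0_lt_compat. nra. }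
  pose proof (Kk_sign_id c k B Hc HB) as E. fold a in E.
  assert (H1: (a*B^2 + c^2)^2 <= c^2 * Qk c k B).
  { assert (0 <= B * (2*k*c^2 - 3*a*c^2*B - a^2*B^3)) by (apply Rmult_le_pos; lra). lra. }
  assert (H2: a*B^2 + c^2 <= c * sqrt (Qk c k B)).
  { rewrite <- (sqrt_pow2 (a*B^2+c^2)) by nra.
    rewrite <- (sqrt_pow2 c) at 2 by lra. rewrite <- sqrt_mult by nra.
    apply sqrt_le_1; [apply pow2_ge_0 | nra | nra]. }
  assert (Hs: 0 < sqrt (Qk c k B)) by (apply sqrt_lt_R0; lra).
  unfold Kk. fold a.
  assert (((a * B + c ^ 2 / B) / sqrt (Qk c k B)) = (a*B^2+c^2)/(B*sqrt (Qk c k B))) by (field; lra).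
  rewrite H0.
  assert (c/B = (c * sqrt (Qk c k B))/(B*sqrt (Qk c k B))) by (field; lra).
  rewrite H3. unfold Rdiv. assert (0 < / (B * sqrt (Qk c k B))) by (apply Rinv_0_lt_compat; nra).
  nra.
Qed.

Lemma Kk_nonneg c k B : 0 < c -> 0 < B -> 0 < Qk c k B -> -1 <= k <= 1 ->
  2*k*c^2 <= ((1-k^2)/c^2)^2*B^3 + 3*((1-k^2)/c^2)*c^2*B -> 0 <= Kk c k B.
Proof.
  intros Hc HB HQ Hk H.
  set (a := (1-k^2)/c^2) in *.
  assert (Ha: 0 <= a). { unfold a. apply Rmult_le_pos. nra. apply Rlt_le, Rinv_0_lt_compat. nra. }
  pose proof (Kk_sign_id c k B Hc HB) as E. fold a in E.
  assert (H1: c^2 * Qk c k B <= (a*B^2 + c^2)^2).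
  { assert (0 <= B * (- (2*k*c^2 - 3*a*c^2*B - a^2*B^3))) by (apply Rmult_le_pos; lra). lra. }
  assert (H2: c * sqrt (Qk c k B) <= a*B^2 + c^2).
  { rewrite <- (sqrt_pow2 (a*B^2+c^2)) by nra.
    rewrite <- (sqrt_pow2 c) at 1 by lra. rewrite <- sqrt_mult by nra.
    apply sqrt_le_1; [nra | apply pow2_ge_0 | nra]. }
  assert (Hs: 0 < sqrt (Qk c k B)) by (apply sqrt_lt_R0; lra).
  unfold Kk. fold a.
  assert (((a * B + c ^ 2 / B) / sqrt (Qk c k B)) = (a*B^2+c^2)/(B*sqrt (Qk c k B))) by (field; lra).
  rewrite H0.
  assert (c/B = (c * sqrt (Qk c k B))/(B*sqrt (Qk c k B))) by (field; lra).
  rewrite H3. unfold Rdiv. assert (0 < / (B * sqrt (Qk c k B))) by (apply Rinv_0_lt_compat; nra).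
  nra.
Qed.

Lemma Kk_decr c k1 k2 B : 0 < c -> 0 < B -> 0 <= k1 -> k1 < k2 -> k2 <= 1 ->
  0 < Qk c k1 B -> Kk c k2 B < Kk c k1 B.
Proof.
  intros Hc HB Hk1 Hk Hk2 HQ.
  assert (HQ2: Qk c k1 B < Qk c k2 B).
  { unfold Qk. assert (0 < (k2^2-k1^2)/c^2*B^2).
    { apply Rmult_lt_0_compat. apply Rmult_lt_0_compat. nra. apply Rinv_0_lt_compat; nra. nra. }
    assert ((k2^2-k1^2)/c^2*B^2 = (1-k1^2)/c^2*B^2 - (1-k2^2)/c^2*B^2) by (field; lra).
    nra. }
  assert (HP: (1-k2^2)/c^2 * B + c^2/B < (1-k1^2)/c^2 * B + c^2/B).
  { assert (0 < (k2^2-k1^2)/c^2*B).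
    { apply Rmult_lt_0_compat. apply Rmult_lt_0_compat. nra. apply Rinv_0_lt_compat; nra. nra. }
    assert ((k2^2-k1^2)/c^2*B = (1-k1^2)/c^2*B - (1-k2^2)/c^2*B) by (field; lra).
    lra. }
  assert (HP2: 0 < (1-k2^2)/c^2 * B + c^2/B).
  { assert (0 <= (1-k2^2)/c^2 * B).
    { apply Rmult_le_pos. apply Rmult_le_pos. nra. apply Rlt_le, Rinv_0_lt_compat; nra. lra. }
    assert (0 < c^2/B) by (apply Rdiv_lt_0_compat; nra). lra. }
  assert (S1: 0 < sqrt (Qk c k1 B)) by (apply sqrt_lt_R0; lra).
  assert (S2: sqrt (Qk c k1 B) < sqrt (Qk c k2 B)) by (apply sqrt_lt_1; lra).
  unfold Kk.
  set (P1 := (1-k1^2)/c^2 * B + c^2/B) in *.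
  set (P2 := (1-k2^2)/c^2 * B + c^2/B) in *.
  set (s1 := sqrt (Qk c k1 B)) in *. set (s2 := sqrt (Qk c k2 B)) in *.
  assert (P2/s2 < P1/s1).
  { apply Rlt_trans with (P1/s2).
    - unfold Rdiv. apply Rmult_lt_compat_r. apply Rinv_0_lt_compat; lra. lra.
    - unfold Rdiv. apply Rmult_lt_compat_l. lra. apply Rinv_lt_contravar; nra. }
  lra.
Qed.

Ltac fixQ c k B := 
  repeat match goal with
  | |- _ /\ _ => split
  | |- True => exact I
  | |- 0 < ?e => replace e with (Qk c k B) by (unfold Qk; field; lra)
  | |- sqrt ?e <> 0 => replace e with (Qk c k B) by (unfold Qk; field; lra)
  end.

Lemma Kk_ex_derive c k B : 0 < c -> 0 < B -> 0 < Qk c k B -> ex_derive (Kk c k) B.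
Proof.
  intros Hc HB HQ.
  assert (sqrt (Qk c k B) <> 0) by (apply Rgt_not_eq, sqrt_lt_R0; lra).
  unfold Kk. unfold Qk at 1. auto_derive. fixQ c k B; try lra; auto.
Qed.

Lemma Bang_ex_derive l1 l2 x : ex_derive (Bang l1 l2) x.
Proof. unfold Bang. auto_derive. exact I. Qed.

Lemma cont_of_ex_derive (f : R -> R) x : ex_derive f x -> continuous f x.
Proof. apply (@ex_derive_continuous R_AbsRing R_NormedModule). Qed.

Lemma Kk_cont l1 l2 c k x : 0 < c -> 0 < l2 <= l1 -> 0 < Qk c k (Bang l1 l2 x) ->
  continuous (fun x => Kk c k (Bang l1 l2 x)) x.
Proof.
  intros Hc Hl HQ. pose proof (Bang_bounds l1 l2 x Hl) as HB.
  apply (continuous_comp (Bang l1 l2) (Kk c k)).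
  apply cont_of_ex_derive, Bang_ex_derive.
  apply cont_of_ex_derive, Kk_ex_derive; try nra.
Qed.

Lemma good_Q l1 l2 c k x : 0 < c -> 0 < l2 <= l1 -> 0 <= k <= 1 -> 0 < c^2 - (1-k)*l1^2 ->
  c^2 - (1-k)*l1^2 <= Qk c k (Bang l1 l2 x).
Proof.
  intros Hc Hl Hk Hq. pose proof (Bang_bounds l1 l2 x Hl).
  apply Qk_lower; try lra. nra.
Qed.

Lemma Gk_ex l1 l2 c k a b : 0 < c -> 0 < l2 <= l1 -> 0 <= k <= 1 -> 0 < c^2 - (1-k)*l1^2 ->
  ex_RInt (fun x => Kk c k (Bang l1 l2 x)) a b.
Proof.
  intros. apply (@ex_RInt_continuous R_CompleteNormedModule). intros z _. apply Kk_cont; auto.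
  eapply Rlt_le_trans; [|apply good_Q]; eauto.
Qed.

Lemma Gk_decr l1 l2 c k1 k2 : 0 < c -> 0 < l2 <= l1 -> goodk l1 c k1 -> goodk l1 c k2 ->
  k1 < k2 -> Gk l1 l2 c k2 < Gk l1 l2 c k1.
Proof.
  intros Hc Hl [H1 H1'] [H2 H2'] H12. unfold Gk.
  apply RInt_lt. apply PI_RGT_0.
  - intros. apply Kk_cont; auto. eapply Rlt_le_trans; [|apply good_Q]; eauto; lra.
  - intros. apply Kk_cont; auto. eapply Rlt_le_trans; [|apply good_Q]; eauto; lra.
  - intros. pose proof (Bang_bounds l1 l2 x Hl).
    apply Kk_decr; try lra. nra.
    eapply Rlt_le_trans; [|apply good_Q]; eauto; lra.
Qed.

Definition Lc l1 l2 c m :=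
  2*l1^2/(c^2*sqrt m) + (l1^2/c^2 + c^2/l2^2)*(2*l1^2 + 2*l1^4/c^2)/(m*(2*sqrt m)).

Lemma frac_le a b a' b' : 0 <= a -> a <= a' -> 0 < b' -> b' <= b -> a/b <= a'/b'.
Proof.
  intros. unfold Rdiv. apply Rmult_le_compat; try lra.
  apply Rlt_le, Rinv_0_lt_compat; lra.
  apply Rinv_le_contravar; lra.
Qed.

Lemma Kk_lip l1 l2 c m k k0 B : 0 < c -> 0 < l2 <= l1 -> 0 < m ->
  0 <= k <= 1 -> 0 <= k0 <= 1 -> l2^2 <= B <= l1^2 ->
  m <= Qk c k B -> m <= Qk c k0 B ->
  Rabs (Kk c k B - Kk c k0 B) <= Lc l1 l2 c m * Rabs (k - k0).
Proof.
  intros Hc Hl Hm Hk Hk0 HB HQ HQ0.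
  assert (Bp: 0 < B) by nra.
  assert (sm: 0 < sqrt m) by (apply sqrt_lt_R0; lra).
  set (s := sqrt (Qk c k B)). set (s0 := sqrt (Qk c k0 B)).
  assert (Hs: sqrt m <= s) by (apply sqrt_le_1; lra).
  assert (Hs0: sqrt m <= s0) by (apply sqrt_le_1; lra).
  assert (Es: s*s = Qk c k B) by (apply sqrt_sqrt; lra).
  assert (Es0: s0*s0 = Qk c k0 B) by (apply sqrt_sqrt; lra).
  set (P0 := (1-k0^2)/c^2 * B + c^2/B).
  set (X := (k+k0)*B/(c^2*s)).
  set (Y := P0 * (2*B + (k+k0)*B^2/c^2)/(s*s0*(s+s0))).
  assert (EQ: s*s - s0*s0 = (2*B + (k+k0)*B^2/c^2)*(k-k0)).
  { rewrite Es, Es0. unfold Qk. field. lra. }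
  assert (E: Kk c k B - Kk c k0 B = - (k-k0) * (X + Y)).
  { unfold Kk. fold s s0. fold P0.
    set (P := (1-k^2)/c^2 * B + c^2/B).
    replace (P / s - c / B - (P0 / s0 - c / B)) with ((P-P0)/s + P0*(s0-s)/(s*s0)) by (field; lra).
    replace (s0 - s) with (-(s*s - s0*s0)/(s+s0)) by (field; lra).
    rewrite EQ.
    replace (P - P0) with (-(k+k0)*(k-k0)*B/c^2) by (unfold P, P0; field; lra).
    unfold X, Y. field. repeat split; lra. }
  assert (HX: 0 <= X <= 2*l1^2/(c^2*sqrt m)).
  { unfold X. split.
    - apply Rmult_le_pos. nra. apply Rlt_le, Rinv_0_lt_compat. apply Rmult_lt_0_compat; nra.
    - apply frac_le. nra. nra. apply Rmult_lt_0_compat; nra. apply Rmult_le_compat_l; nra. }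
  assert (HP0: 0 <= P0 <= l1^2/c^2 + c^2/l2^2).
  { unfold P0. 
    assert (0 <= (1-k0^2)/c^2*B <= l1^2/c^2).
    { split. apply Rmult_le_pos. apply Rmult_le_pos. nra. apply Rlt_le, Rinv_0_lt_compat; nra. lra.
      replace ((1-k0^2)/c^2*B) with ((1-k0^2)*B/c^2) by (field; lra).
      assert (0 <= 1-k0^2 <= 1) by nra.
      apply frac_le; [nra | nra | nra | lra]. }
    assert (0 <= c^2/B <= c^2/l2^2).
    { split. apply Rlt_le, Rdiv_lt_0_compat; nra. apply frac_le; [nra|lra|nra|lra]. }
    lra. }
  assert (HN: 0 <= 2*B + (k+k0)*B^2/c^2 <= 2*l1^2 + 2*l1^4/c^2).
  { assert (0 <= (k+k0)*B^2/c^2 <= 2*l1^4/c^2).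
    { split. apply Rmult_le_pos. nra. apply Rlt_le, Rinv_0_lt_compat; nra.
      assert (B^2 <= l1^4) by nra.
      apply frac_le; [nra | nra | nra | lra]. }
    lra. }
  assert (HY: 0 <= Y <= (l1^2/c^2 + c^2/l2^2)*(2*l1^2 + 2*l1^4/c^2)/(m*(2*sqrt m))).
  { unfold Y. split.
    - apply Rmult_le_pos. nra. apply Rlt_le, Rinv_0_lt_compat. 
      apply Rmult_lt_0_compat. nra. lra.
    - apply frac_le. nra. apply Rmult_le_compat; lra.
      nra.
      assert (m <= s*s0).
      { rewrite <- (sqrt_sqrt m) by lra. apply Rmult_le_compat; lra. }
      apply Rmult_le_compat; lra. }
  rewrite E, Rabs_mult, Rabs_Ropp, (Rabs_right (X+Y)) by lra.
  unfold Lc. rewrite (Rmult_comm (Rabs (k-k0))). apply Rmult_le_compat_r. apply Rabs_pos. lra.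
Qed.

Lemma cont_minus (f g : R->R) x : continuous f x -> continuous g x -> continuous (fun y => f y - g y) x.
Proof. intros; apply (@continuous_minus R_UniformSpace R_AbsRing R_NormedModule f g); auto. Qed.

Lemma Kk_cont_good l1 l2 c k x : 0 < c -> 0 < l2 <= l1 -> 0 <= k <= 1 -> 0 < c^2 - (1-k)*l1^2 ->
  continuous (fun x => Kk c k (Bang l1 l2 x)) x.
Proof.
  intros. apply Kk_cont; auto. eapply Rlt_le_trans; [|apply good_Q]; eauto.
Qed.

Lemma Gk_lip_bound l1 l2 c m k k0 : 0 < c -> 0 < l2 <= l1 -> 0 < m ->
  0 <= k <= 1 -> 0 <= k0 <= 1 ->
  m <= c^2 - (1-k)*l1^2 -> m <= c^2 - (1-k0)*l1^2 ->
  Rabs (Gk l1 l2 c k - Gk l1 l2 c k0) <= PI * (Rabs (Lc l1 l2 c m) * Rabs (k - k0)).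
Proof.
  intros Hc Hl Hm Hk Hk0 Hq Hq0. unfold Gk.
  assert (E1 := Gk_ex l1 l2 c k 0 PI Hc Hl Hk ltac:(lra)).
  assert (E2 := Gk_ex l1 l2 c k0 0 PI Hc Hl Hk0 ltac:(lra)).
  pose proof (RInt_minus _ _ _ _ E1 E2) as Em.
  change (RInt (fun x => Kk c k (Bang l1 l2 x) - Kk c k0 (Bang l1 l2 x)) 0 PI =
     RInt (fun x => Kk c k (Bang l1 l2 x)) 0 PI - RInt (fun x => Kk c k0 (Bang l1 l2 x)) 0 PI) in Em.
  rewrite <- Em.
  assert (Ed: ex_RInt (fun x => Kk c k (Bang l1 l2 x) - Kk c k0 (Bang l1 l2 x)) 0 PI).
  { apply (@ex_RInt_continuous R_CompleteNormedModule). intros z _.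
    apply cont_minus; apply Kk_cont_good; auto; lra. }
  eapply Rle_trans. apply abs_RInt_le. pose proof PI_RGT_0; lra. exact Ed.
  eapply Rle_trans. apply RInt_le with (g := fun _ => Rabs (Lc l1 l2 c m) * Rabs (k - k0)).
  pose proof PI_RGT_0; lra.
  apply (@ex_RInt_continuous R_CompleteNormedModule). intros z _.
  apply (continuous_comp (fun x => Kk c k (Bang l1 l2 x) - Kk c k0 (Bang l1 l2 x)) Rabs).
  apply cont_minus; apply Kk_cont_good; auto; lra.
  apply continuous_Rabs.
  apply ex_RInt_const.
  intros x _. pose proof (Bang_bounds l1 l2 x Hl).
  eapply Rle_trans. apply Kk_lip with (l1:=l1) (l2:=l2) (m:=m); auto.
  eapply Rle_trans; [|apply Qk_lower with (l1:=l1)]; try lra; nra.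
  eapply Rle_trans; [|apply Qk_lower with (l1:=l1)]; try lra; nra.
  apply Rmult_le_compat_r. apply Rabs_pos. apply Rle_abs.
  rewrite RInt_const. unfold scal; simpl; unfold mult; simpl. lra.
Qed.

Lemma Gk_cont l1 l2 c k0 : 0 < c -> 0 < l2 <= l1 -> goodk l1 c k0 ->
  continuity_pt (Gk l1 l2 c) k0.
Proof.
  intros Hc Hl [Hk0 Hq0].
  set (q0 := c^2 - (1-k0)*l1^2).
  assert (Hq: 0 < q0) by (unfold q0; lra).
  set (m := q0/2).
  assert (l1p: 0 < l1^2) by nra.
  set (d := Rmin (k0/2) (Rmin ((1-k0)/2) (q0/(2*l1^2)))).
  assert (dp: 0 < d).
  { unfold d. repeat apply Rmin_pos; try lra. apply Rdiv_lt_0_compat; lra. }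
  set (L := Rabs (Lc l1 l2 c m)).
  assert (Lp: 0 <= L) by apply Rabs_pos.
  intros eps Heps.
  exists (Rmin d (eps / (PI*L + 1))). split.
  { apply Rmin_pos. lra. apply Rdiv_lt_0_compat. lra. pose proof PI_RGT_0. nra. }
  intros k [_ Hk]. simpl in Hk |- *. unfold R_dist in *.
  assert (Hk1: Rabs (k - k0) < d) by (eapply Rlt_le_trans; [apply Hk| apply Rmin_l]).
  assert (Hk2: Rabs (k - k0) < eps / (PI*L+1)) by (eapply Rlt_le_trans; [apply Hk| apply Rmin_r]).
  assert (d1: d <= k0/2) by apply Rmin_l.
  assert (d2: d <= (1-k0)/2) by (eapply Rle_trans; [apply Rmin_r| apply Rmin_l]).
  assert (d3: d <= q0/(2*l1^2)) by (eapply Rle_trans; [apply Rmin_r| apply Rmin_r]).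
  apply Rabs_def2 in Hk1.
  assert (d3': d * l1^2 <= q0/2).
  { apply Rmult_le_compat_r with (r:=l1^2) in d3; [|lra].
    replace (q0/(2*l1^2)*l1^2) with (q0/2) in d3 by (field; lra). lra. }
  eapply Rle_lt_trans. apply Gk_lip_bound with (m := m); auto; try lra.
  unfold m; lra. unfold m, q0 in *. nra.
  unfold m, q0 in *. lra.
  fold L. pose proof PI_RGT_0.
  assert (PI * (L * Rabs (k - k0)) <= PI * L * (eps/(PI*L+1))).
  { rewrite <- Rmult_assoc. apply Rmult_le_compat_l. nra. lra. }
  assert (PI * L * (eps/(PI*L+1)) < eps).
  { replace (PI * L * (eps/(PI*L+1))) with (eps * (PI*L/(PI*L+1))) by (field; nra).
    assert (PI*L/(PI*L+1) < 1).
    { apply (Rmult_lt_reg_r (PI*L+1)). nra. unfold Rdiv. rewrite Rmult_assoc, Rinv_l by nra. nra. }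
    nra. }
  lra.
Qed.

Lemma RInt_nonpos (f : R -> R) a b : a <= b -> ex_RInt f a b ->
  (forall x, a < x < b -> f x <= 0) -> RInt f a b <= 0.
Proof.
  intros Hab Hf H.
  eapply Rle_trans. apply RInt_le with (g := fun _ => 0); auto. apply ex_RInt_const.
  rewrite RInt_const. unfold scal; simpl; unfold mult; simpl. lra.
Qed.

Lemma low_end l1 l2 c : 0 < c -> 0 < l2 <= l1 ->
  exists k, goodk l1 c k /\ Gk l1 l2 c k <= 0.
Proof.
  intros Hc Hl.
  assert (l1p: 0 < l1) by lra.
  set (eta := Rmin (1/2) (Rmin (c^2/(12*l1^2)) (c^3/(4*l1^3)))).
  assert (e1: eta <= 1/2) by apply Rmin_l.
  assert (e2: eta <= c^2/(12*l1^2)) by (eapply Rle_trans; [apply Rmin_r|apply Rmin_l]).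
  assert (e3: eta <= c^3/(4*l1^3)) by (eapply Rle_trans; [apply Rmin_r|apply Rmin_r]).
  assert (ep: 0 < eta).
  { unfold eta. repeat apply Rmin_pos; try lra; apply Rdiv_lt_0_compat; try lra;
    repeat apply Rmult_lt_0_compat; try lra; apply pow_lt; lra. }
  assert (e2': eta * l1^2 <= c^2/12).
  { apply Rmult_le_compat_r with (r:=l1^2) in e2; [|nra].
    replace (c^2/(12*l1^2)*l1^2) with (c^2/12) in e2 by (field; lra). lra. }
  assert (e3': eta * l1^3 <= c^3/4).
  { apply Rmult_le_compat_r with (r:=l1^3) in e3; [|apply pow_le; lra].
    replace (c^3/(4*l1^3)*l1^3) with (c^3/4) in e3 by (field; lra). lra. }
  exists (1 - eta).
  assert (G: goodk l1 c (1-eta)).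
  { split. lra. nra. }
  split; auto.
  unfold Gk. apply RInt_nonpos. pose proof PI_RGT_0; lra.
  apply Gk_ex; auto; destruct G; lra.
  intros x _. pose proof (Bang_bounds l1 l2 x Hl) as HB.
  set (B := Bang l1 l2 x) in *.
  apply Kk_nonpos; try lra. nra.
  eapply Rlt_le_trans; [|apply Qk_lower with (l1:=l1)]; try lra; nra.
  set (a := (1 - (1-eta)^2)/c^2).
  assert (Ha: 0 <= a <= 2*eta/c^2).
  { unfold a. split. apply Rmult_le_pos. nra. apply Rlt_le, Rinv_0_lt_compat; nra.
    apply frac_le; [nra|nra|nra|lra]. }
  assert (A1: a^2*B^3 <= 4*eta^2*l1^6/c^4).
  { assert (a^2 <= 4*eta^2/c^4).
    { replace (4*eta^2/c^4) with ((2*eta/c^2)^2) by (field; lra). nra. }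
    assert (B^3 <= l1^6).
    { replace (l1^6) with ((l1^2)^3) by ring. apply pow_incr. nra. }
    replace (4*eta^2*l1^6/c^4) with ((4*eta^2/c^4)*l1^6) by (field; lra).
    apply Rmult_le_compat; try nra. }
  assert (A2: 4*eta^2*l1^6/c^4 <= c^2/4).
  { assert ((eta*l1^3)^2 <= (c^3/4)^2) by (apply pow_incr; split; [apply Rmult_le_pos; [lra | apply pow_le; lra] | lra]).
    apply (Rmult_le_reg_r (c^4)). nra.
    replace (4*eta^2*l1^6/c^4*c^4) with (4*(eta*l1^3)^2) by (field; lra). nra. }
  assert (A3: 3*a*c^2*B <= 6*eta*l1^2).
  { assert (a*c^2 <= 2*eta).
    { destruct Ha as [_ Ha]. apply Rmult_le_compat_r with (r:=c^2) in Ha; [|nra].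
      replace (2*eta/c^2*c^2) with (2*eta) in Ha by (field; lra). lra. }
    assert (0 <= a*c^2) by nra. nra. }
  nra.
Qed.

Lemma high_end1 l1 l2 c : 0 < c -> 0 < l2 <= l1 -> l1 < c ->
  exists k, goodk l1 c k /\ 0 <= Gk l1 l2 c k.
Proof.
  intros Hc Hl Hlc.
  set (k := Rmin (1/2) (l2^2/c^2)).
  assert (k1: k <= 1/2) by apply Rmin_l.
  assert (k2: k <= l2^2/c^2) by apply Rmin_r.
  assert (kp: 0 < k).
  { unfold k. apply Rmin_pos. lra. apply Rdiv_lt_0_compat; nra. }
  assert (k2': k*c^2 <= l2^2).
  { apply Rmult_le_compat_r with (r:=c^2) in k2; [|nra].
    replace (l2^2/c^2*c^2) with (l2^2) in k2 by (field; lra). lra. }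
  exists k.
  assert (G: goodk l1 c k) by (split; [lra | nra]).
  split; auto.
  unfold Gk. apply RInt_ge_0. pose proof PI_RGT_0; lra.
  apply Gk_ex; auto; destruct G; lra.
  intros x _. pose proof (Bang_bounds l1 l2 x Hl) as HB.
  set (B := Bang l1 l2 x) in *.
  apply Kk_nonneg; try lra. nra.
  eapply Rlt_le_trans; [|apply Qk_lower with (l1:=l1)]; try lra; nra.
  set (a := (1 - k^2)/c^2).
  assert (Ha: 3/4 <= a*c^2) by (unfold a; field_simplify; nra).
  assert (0 <= a) by nra.
  assert (0 <= a^2*B^3) by (apply Rmult_le_pos; [nra| apply pow_le; nra]).
  nra.
Qed.

Lemma sin_sq_le x : 0 <= x <= PI -> sin x ^ 2 <= x ^ 2.
Proof.
  intros H. pose proof (sin_ge_0 x ltac:(lra) ltac:(lra)).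
  destruct (Req_dec x 0). subst. rewrite sin_0. lra.
  pose proof (sin_lt_x x ltac:(lra)). nra.
Qed.

Lemma high_end2 l1 l2 c : 0 < c -> 0 < l2 <= l1 -> c <= l1 ->
  exists k, goodk l1 c k /\ 0 <= Gk l1 l2 c k.
Proof.
  intros Hc Hl Hcl.
  set (M := (c^2 + 2*l1^2)*(1+l1^2)/c^2).
  assert (Mp: 0 < M) by (unfold M; apply Rdiv_lt_0_compat; nra).
  set (sM := sqrt M). assert (sMp: 0 < sM) by (apply sqrt_lt_R0; lra).
  set (C := c^2/(l1^2*sM)). set (Dd := c/l2^2).
  assert (Cp: 0 < C) by (unfold C; apply Rdiv_lt_0_compat; [nra | apply Rmult_lt_0_compat; nra]).
  assert (Dp: 0 < Dd) by (unfold Dd; apply Rdiv_lt_0_compat; nra).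
  set (N := PI * Dd / C).
  set (a := Rmin (c/2) (PI / exp N)).
  pose proof PI_RGT_0 as Hpi.
  assert (a1: a <= c/2) by apply Rmin_l.
  assert (a2: a <= PI / exp N) by apply Rmin_r.
  assert (ap: 0 < a).
  { unfold a. apply Rmin_pos. lra. apply Rdiv_lt_0_compat. lra. apply exp_pos. }
  assert (a2': a * exp N <= PI).
  { apply Rmult_le_compat_r with (r:=exp N) in a2; [|apply Rlt_le, exp_pos].
    replace (PI / exp N * exp N) with PI in a2 by (field; apply Rgt_not_eq, exp_pos). lra. }
  set (k := 1 - (c^2 - a^2)/l1^2).
  assert (l1p : 0 < l1^2) by nra.
  assert (E1k: (1-k)*l1^2 = c^2 - a^2) by (unfold k; field; lra).
  assert (k1: k < 1).
  { unfold k. assert (0 < (c^2-a^2)/l1^2) by (apply Rdiv_lt_0_compat; nra). lra. }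
  assert (k0: 0 < k).
  { unfold k. assert ((c^2-a^2)/l1^2 < 1).
    { apply (Rmult_lt_reg_r (l1^2)). lra. unfold Rdiv. rewrite Rmult_assoc, Rinv_l by lra. nra. }
    lra. }
  exists k.
  assert (G: goodk l1 c k) by (split; [lra | nra]).
  split; auto.
  set (g := fun x => C / (a + x) - Dd).
  set (F := fun x => C * ln (a + x) - Dd * x).
  assert (HF: forall x, 0 <= x -> is_derive F x (g x)).
  { intros x Hx. unfold F, g. auto_derive. lra. field. lra. }
  assert (Hg: is_RInt g 0 PI (F PI - F 0)).
  { apply (is_RInt_derive F g 0 PI).
    - intros x Hx. rewrite Rmin_left in Hx by lra. apply HF; lra.
    - intros x Hx. rewrite Rmin_left in Hx by lra.
      apply cont_of_ex_derive. unfold g. auto_derive. lra. }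
  assert (Hgv: 0 <= F PI - F 0).
  { unfold F. rewrite Rplus_0_r. 
    assert (ln a + N <= ln (a + PI)).
    { rewrite <- (ln_exp N) at 1. rewrite <- ln_mult by (auto; apply exp_pos).
      apply ln_le. apply Rmult_lt_0_compat; auto; apply exp_pos. lra. }
    assert (C * N = PI * Dd) by (unfold N; field; lra).
    assert (C * N <= C * (ln (a+PI) - ln a)) by (apply Rmult_le_compat_l; lra).
    lra. }
  unfold Gk. apply Rle_trans with (RInt g 0 PI).
  { rewrite (is_RInt_unique _ _ _ _ Hg). exact Hgv. }
  apply RInt_le. lra. exists (F PI - F 0). exact Hg.
  apply Gk_ex; auto; nra.
  intros x Hx. pose proof (Bang_bounds l1 l2 x Hl) as HB.
  set (B := Bang l1 l2 x) in *.
  assert (Hl1B: l1^2 - B = (l1^2 - l2^2) * sin x ^ 2).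
  { unfold B, Bang. pose proof (sc2 x). nra. }
  pose proof (sin_sq_le x ltac:(lra)).
  assert (Hsin0: 0 <= sin x ^2) by nra.
  assert (Bp: 0 < B) by nra.
  assert (F1: 0 < c^2 - (1-k)*B <= (1+l1^2)*(a^2 + x^2)).
  { split. nra.
    replace (c^2 - (1-k)*B) with (a^2 + (1-k)*(l1^2 - B)) by nra.
    rewrite Hl1B. 
    assert ((1-k)*((l1^2-l2^2)*sin x^2) <= l1^2 * x^2).
    { assert (0 <= l1^2 - l2^2 <= l1^2) by nra.
      assert ((l1^2-l2^2)*sin x^2 <= l1^2 * x^2) by nra.
      assert (0 <= (l1^2-l2^2)*sin x^2) by nra. nra. }
    nra. }
  assert (F2: 0 < c^2 + (1+k)*B <= c^2 + 2*l1^2) by nra.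
  assert (EQ: c^2 * Qk c k B = (c^2 + (1+k)*B)*(c^2 - (1-k)*B)) by (unfold Qk; field; lra).
  assert (Qp: 0 < Qk c k B).
  { assert (0 < c^2 * Qk c k B) by (rewrite EQ; nra). nra. }
  assert (QM: Qk c k B <= M * (a + x)^2).
  { assert (c^2 * Qk c k B <= (c^2 + 2*l1^2)*((1+l1^2)*(a^2 + x^2))).
    { rewrite EQ. apply Rmult_le_compat; lra. }
    assert (a^2 + x^2 <= (a+x)^2) by nra.
    apply (Rmult_le_reg_l (c^2)). nra.
    unfold M. replace (c^2 * ((c^2 + 2*l1^2)*(1+l1^2)/c^2 * (a+x)^2)) with
      ((c^2 + 2*l1^2)*((1+l1^2)*(a+x)^2)) by (field; lra).
    eapply Rle_trans. apply H0. apply Rmult_le_compat_l. nra. nra. }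
  assert (SQ: sqrt (Qk c k B) <= sM * (a + x)).
  { unfold sM. rewrite <- (sqrt_pow2 (a+x)) by lra. rewrite <- sqrt_mult by nra.
    apply sqrt_le_1; nra. }
  assert (SQp: 0 < sqrt (Qk c k B)) by (apply sqrt_lt_R0; lra).
  unfold g, Kk.
  set (P := (1 - k^2)/c^2 * B + c^2/B).
  assert (HP: c^2/l1^2 <= P).
  { unfold P. assert (0 <= (1-k^2)/c^2*B).
    { apply Rmult_le_pos. apply Rmult_le_pos. nra. apply Rlt_le, Rinv_0_lt_compat; nra. lra. }
    assert (c^2/l1^2 <= c^2/B) by (apply frac_le; nra). lra. }
  assert (T1: C / (a+x) <= P / sqrt (Qk c k B)).
  { unfold C. replace (c^2/(l1^2*sM)/(a+x)) with ((c^2/l1^2)/(sM*(a+x))) by (field; repeat split; lra).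
    apply frac_le; try lra. apply Rlt_le, Rdiv_lt_0_compat; nra. }
  assert (T2: c / B <= Dd) by (unfold Dd; apply frac_le; nra).
  lra.
Qed.

Lemma Gk_zero l1 l2 c : 0 < c -> 0 < l2 <= l1 ->
  exists k, goodk l1 c k /\ Gk l1 l2 c k = 0.
Proof.
  intros Hc Hl.
  assert (HA: exists k, goodk l1 c k /\ 0 <= Gk l1 l2 c k).
  { destruct (Rlt_le_dec l1 c). apply high_end1; auto. apply high_end2; auto. }
  destruct HA as [kA [GA HA]].
  destruct (low_end l1 l2 c Hc Hl) as [kB [GB HB]].
  destruct (Rle_lt_dec kA kB) as [Hab | Hab].
  - destruct (Req_dec (Gk l1 l2 c kA) 0) as [E|E]. exists kA; auto.
    destruct (Req_dec (Gk l1 l2 c kB) 0) as [E'|E']. exists kB; auto.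
    assert (Hab': kA < kB).
    { destruct Hab; auto. subst. lra. }
    destruct (Ranalysis5.IVT_interv (fun k => - Gk l1 l2 c k) kA kB) as [z [Hz Ez]].
    + intros a Ha. apply continuity_pt_opp. apply Gk_cont; auto.
      destruct GA, GB. split; [lra | nra].
    + exact Hab'.
    + lra.
    + lra.
    + exists z. split. destruct GA, GB. split; [lra | nra]. lra.
  - pose proof (Gk_decr l1 l2 c kB kA Hc Hl GB GA Hab). lra.
Qed.

Lemma sqrtQ_ex_derive c k B : 0 < c -> 0 < Qk c k B -> ex_derive (fun B => sqrt (Qk c k B)) B.
Proof.
  intros Hc HQ. unfold Qk at 1. auto_derive. fixQ c k B; auto.
Qed.

Lemma invsqrtQ_ex_derive c k B : 0 < c -> 0 < Qk c k B -> ex_derive (fun B => / sqrt (Qk c k B)) B.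
Proof.
  intros Hc HQ. assert (sqrt (Qk c k B) <> 0) by (apply Rgt_not_eq, sqrt_lt_R0; lra).
  unfold Qk at 1. auto_derive. fixQ c k B; auto.
Qed.

Record Good (l1 l2 c th : R) : Prop := mkGood {
  g_c : 0 < c; g_l : 0 < l2 <= l1; g_k : 0 <= cos th <= 1;
  g_q : 0 < c^2 - (1 - cos th) * l1^2 }.


Lemma r_eq l1 l2 c th x : Good l1 l2 c th ->
  phi_rhs l1 l2 c th x = sqrt (Qk c (cos th) (Bang l1 l2 x)).
Proof. intros []. apply phi_rhs_eq; auto. Qed.

Lemma r_Q l1 l2 c th x : Good l1 l2 c th ->
  c^2 - (1 - cos th) * l1^2 <= Qk c (cos th) (Bang l1 l2 x) <= c^2 + 2*l1^2.
Proof.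
  intros []. pose proof (Bang_bounds l1 l2 x g_l0). split.
  apply good_Q; auto.
  eapply Rle_trans. apply Qk_upper; try lra; nra. lra.
Qed.

Lemma r_bounds l1 l2 c th x : Good l1 l2 c th ->
  0 < sqrt (c^2 - (1 - cos th) * l1^2) <= phi_rhs l1 l2 c th x /\
  phi_rhs l1 l2 c th x <= sqrt (c^2 + 2*l1^2).
Proof.
  intros G. rewrite r_eq by auto. pose proof (r_Q l1 l2 c th x G). destruct G.
  split. split. apply sqrt_lt_R0; auto. apply sqrt_le_1; lra.
  apply sqrt_le_1; lra.
Qed.

Lemma r_cont l1 l2 c th x : Good l1 l2 c th -> continuous (phi_rhs l1 l2 c th) x.
Proof.
  intros G. 
  apply (continuous_ext (fun x => sqrt (Qk c (cos th) (Bang l1 l2 x)))).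
  intros; symmetry; apply r_eq; auto.
  apply (continuous_comp (Bang l1 l2) (fun B => sqrt (Qk c (cos th) B))).
  apply cont_of_ex_derive, Bang_ex_derive.
  apply cont_of_ex_derive, sqrtQ_ex_derive. destruct G; auto.
  pose proof (r_Q l1 l2 c th x G). destruct G. lra.
Qed.

Lemma invr_cont l1 l2 c th x : Good l1 l2 c th -> continuous (fun y => / phi_rhs l1 l2 c th y) x.
Proof.
  intros G. 
  apply (continuous_ext (fun x => / sqrt (Qk c (cos th) (Bang l1 l2 x)))).
  intros; rewrite r_eq; auto.
  apply (continuous_comp (Bang l1 l2) (fun B => / sqrt (Qk c (cos th) B))).
  apply cont_of_ex_derive, Bang_ex_derive.
  apply cont_of_ex_derive, invsqrtQ_ex_derive. destruct G; auto.
  pose proof (r_Q l1 l2 c th x G). destruct G. lra.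
Qed.

Definition Tf l1 l2 c th x := RInt (fun y => / phi_rhs l1 l2 c th y) 0 x.

Lemma invr_ex l1 l2 c th a b : Good l1 l2 c th -> ex_RInt (fun y => / phi_rhs l1 l2 c th y) a b.
Proof.
  intros G. apply (@ex_RInt_continuous R_CompleteNormedModule). intros. apply invr_cont; auto.
Qed.

Lemma T_derive l1 l2 c th x : Good l1 l2 c th ->
  is_derive (Tf l1 l2 c th) x (/ phi_rhs l1 l2 c th x).
Proof.
  intros G. apply (is_derive_RInt (fun y => / phi_rhs l1 l2 c th y) (Tf l1 l2 c th) 0 x).
  apply filter_forall. intros b. unfold Tf. apply (@RInt_correct R_CompleteNormedModule). apply invr_ex; auto.
  apply invr_cont; auto.
Qed.

Lemma T_diff l1 l2 c th x y : Good l1 l2 c th ->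
  Tf l1 l2 c th y - Tf l1 l2 c th x = RInt (fun y => / phi_rhs l1 l2 c th y) x y.
Proof.
  intros G. unfold Tf. rewrite <- (RInt_Chasles (fun y => / phi_rhs l1 l2 c th y) 0 x y).
  change (plus ?a ?b) with (a + b). ring.
  apply invr_ex; auto. apply invr_ex; auto.
Qed.

Lemma T_0 l1 l2 c th : Tf l1 l2 c th 0 = 0.
Proof. unfold Tf. rewrite RInt_point. reflexivity. Qed.

Lemma T_incr l1 l2 c th x y : Good l1 l2 c th -> x <= y ->
  (y - x) / sqrt (c^2 + 2*l1^2) <= Tf l1 l2 c th y - Tf l1 l2 c th x.
Proof.
  intros G Hxy. rewrite T_diff by auto.
  assert (rp: 0 < sqrt (c^2 + 2*l1^2)) by (destruct G; apply sqrt_lt_R0; nra).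
  replace ((y-x)/sqrt (c^2 + 2*l1^2)) with (RInt (fun _ => / sqrt (c^2 + 2*l1^2)) x y).
  apply RInt_le; auto. apply ex_RInt_const. apply invr_ex; auto.
  intros z _. pose proof (r_bounds l1 l2 c th z G). apply Rinv_le_contravar; lra.
  rewrite RInt_const. unfold scal; simpl; unfold mult; simpl. reflexivity.
Qed.

Lemma T_strict l1 l2 c th x y : Good l1 l2 c th -> x < y ->
  Tf l1 l2 c th x < Tf l1 l2 c th y.
Proof.
  intros G Hxy. pose proof (T_incr l1 l2 c th x y G ltac:(lra)).
  assert (rp: 0 < sqrt (c^2 + 2*l1^2)) by (destruct G; apply sqrt_lt_R0; nra).
  assert (0 < (y-x)/sqrt (c^2 + 2*l1^2)) by (apply Rdiv_lt_0_compat; lra). lra.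
Qed.

Lemma T_inj l1 l2 c th x y : Good l1 l2 c th -> Tf l1 l2 c th x = Tf l1 l2 c th y -> x = y.
Proof.
  intros G E. destruct (Rtotal_order x y) as [H|[H|H]]; auto.
  pose proof (T_strict l1 l2 c th x y G H); lra.
  pose proof (T_strict l1 l2 c th y x G H); lra.
Qed.

Lemma T_continuity l1 l2 c th : Good l1 l2 c th -> continuity (Tf l1 l2 c th).
Proof.
  intros G x. apply derivable_continuous_pt. apply ex_derive_Reals_0.
  eexists. apply T_derive; auto.
Qed.

Lemma T_surj l1 l2 c th u : Good l1 l2 c th -> exists x, Tf l1 l2 c th x = u.
Proof.
  intros G. set (rho := sqrt (c^2 + 2*l1^2)).
  assert (rp: 0 < rho) by (destruct G; apply sqrt_lt_R0; nra).
  set (a := - rho * Rabs u). set (b := rho * Rabs u).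
  pose proof (Rabs_pos u).
  pose proof (T_incr l1 l2 c th a 0 G ltac:(unfold a; nra)) as Ha.
  pose proof (T_incr l1 l2 c th 0 b G ltac:(unfold b; nra)) as Hb.
  rewrite T_0 in Ha, Hb. fold rho in Ha, Hb.
  replace ((0 - a)/rho) with (Rabs u) in Ha by (unfold a; field; lra).
  replace ((b - 0)/rho) with (Rabs u) in Hb by (unfold b; field; lra).
  destruct (IVT_gen (Tf l1 l2 c th) a b u (T_continuity l1 l2 c th G)) as [x [_ Hx]].
  { pose proof (Rle_abs u). pose proof (Rle_abs (-u)). rewrite Rabs_Ropp in H1.
    split. eapply Rle_trans. apply Rmin_l. lra. eapply Rle_trans. 2: apply Rmax_r. lra. }
  exists x; auto.
Qed.

Definition phi0 l1 l2 c th u := epsilon (inhabits 0) (fun x => Tf l1 l2 c th x = u).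

Lemma phi0_spec l1 l2 c th u : Good l1 l2 c th -> Tf l1 l2 c th (phi0 l1 l2 c th u) = u.
Proof.
  intros G. unfold phi0. apply (epsilon_spec (inhabits 0) (fun x => Tf l1 l2 c th x = u)).
  apply T_surj; auto.
Qed.

Lemma phi0_lip l1 l2 c th u v : Good l1 l2 c th -> u <= v ->
  0 <= phi0 l1 l2 c th v - phi0 l1 l2 c th u <= sqrt (c^2 + 2*l1^2) * (v - u).
Proof.
  intros G Huv.
  assert (rp: 0 < sqrt (c^2 + 2*l1^2)) by (destruct G; apply sqrt_lt_R0; nra).
  pose proof (phi0_spec l1 l2 c th u G) as Eu. pose proof (phi0_spec l1 l2 c th v G) as Ev.
  set (x := phi0 l1 l2 c th u) in *. set (y := phi0 l1 l2 c th v) in *.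
  assert (xy: x <= y).
  { destruct (Rle_lt_dec x y); auto. pose proof (T_strict l1 l2 c th y x G r). lra. }
  pose proof (T_incr l1 l2 c th x y G xy). rewrite Eu, Ev in H.
  split. lra.
  apply Rmult_le_compat_r with (r := sqrt (c^2 + 2*l1^2)) in H; [|lra].
  replace ((y - x) / sqrt (c ^ 2 + 2 * l1 ^ 2) * sqrt (c ^ 2 + 2 * l1 ^ 2)) with (y - x) in H
    by (field; apply Rgt_not_eq; lra). lra.
Qed.

Lemma phi0_cont l1 l2 c th u : Good l1 l2 c th -> continuity_pt (phi0 l1 l2 c th) u.
Proof.
  intros G.
  set (rho := sqrt (c^2 + 2*l1^2)).
  assert (rp: 0 < rho) by (destruct G; apply sqrt_lt_R0; nra).
  intros eps Heps. exists (eps / rho). split. apply Rdiv_lt_0_compat; lra.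
  intros v [_ Hv]. simpl in Hv |- *. unfold R_dist in *.
  destruct (Rle_lt_dec u v).
  - pose proof (phi0_lip l1 l2 c th u v G r). fold rho in H.
    rewrite Rabs_right in Hv by lra. rewrite Rabs_right by lra.
    apply Rmult_lt_compat_l with (r:=rho) in Hv; auto.
    replace (rho * (eps/rho)) with eps in Hv by (field; apply Rgt_not_eq; lra). lra.
  - pose proof (phi0_lip l1 l2 c th v u G ltac:(lra)). fold rho in H.
    rewrite Rabs_left1 in Hv by lra. rewrite Rabs_left1 by lra.
    apply Rmult_lt_compat_l with (r:=rho) in Hv; auto.
    replace (rho * (eps/rho)) with eps in Hv by (field; apply Rgt_not_eq; lra). lra.
Qed.

Lemma phi0_derive l1 l2 c th u : Good l1 l2 c th ->
  is_derive (phi0 l1 l2 c th) u (phi_rhs l1 l2 c th (phi0 l1 l2 c th u)).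
Proof.
  intros G. apply is_derive_Reals.
  set (T := Tf l1 l2 c th). set (g := phi0 l1 l2 c th).
  assert (Prf: forall a, g (u-1) <= a <= g (u+1) -> derivable_pt T a).
  { intros a _. apply ex_derive_Reals_0. eexists. apply T_derive; auto. }
  assert (Hinc: g (u-1) <= g u <= g (u+1)).
  { pose proof (phi0_lip l1 l2 c th (u-1) u G ltac:(lra)).
    pose proof (phi0_lip l1 l2 c th u (u+1) G ltac:(lra)). unfold g. lra. }
  pose proof (Ranalysis5.derivable_pt_lim_recip_interv T g (u-1) (u+1) u Prf
     (phi0_cont l1 l2 c th u G) ltac:(lra) ltac:(lra) Hinc) as H.
  assert (Hd: derive_pt T (g u) (Prf (g u) Hinc) = / phi_rhs l1 l2 c th (g u)).
  { apply derive_pt_eq_0. apply is_derive_Reals. apply T_derive; auto. }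
  pose proof (r_bounds l1 l2 c th (g u) G).
  rewrite Hd in H.
  replace (phi_rhs l1 l2 c th (g u)) with (1 / / phi_rhs l1 l2 c th (g u)) by (field; lra).
  apply H.
  - intros x0 _. unfold comp, id. apply phi0_spec; auto.
  - apply Rgt_not_eq, Rlt_gt, Rinv_0_lt_compat. lra.
Qed.

Lemma exists_phi l1 l2 c th : Good l1 l2 c th -> is_phi l1 l2 c th (phi0 l1 l2 c th).
Proof.
  intros G. split.
  - apply (T_inj l1 l2 c th). auto. rewrite phi0_spec, T_0; auto.
  - intros u. apply phi0_derive; auto.
Qed.

Lemma psi_phi l1 l2 c th : Good l1 l2 c th -> is_phi l1 l2 c th (phi l1 l2 c th).
Proof.
  intros G. unfold phi. apply epsilon_spec. exists (phi0 l1 l2 c th). apply exists_phi; auto.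
Qed.

Lemma T_psi l1 l2 c th u : Good l1 l2 c th -> Tf l1 l2 c th (phi l1 l2 c th u) = u.
Proof.
  intros G. destruct (psi_phi l1 l2 c th G) as [H0 Hd].
  set (psi := phi l1 l2 c th) in *.
  set (h := fun u => Tf l1 l2 c th (psi u) - u).
  assert (Hh: forall t, is_derive h t 0).
  { intros t. unfold h.
    pose proof (is_derive_comp (Tf l1 l2 c th) psi t _ _ (T_derive l1 l2 c th (psi t) G) (Hd t)) as H1.
    pose proof (is_derive_minus _ _ t _ _ H1 (is_derive_id t)) as H2.
    pose proof (r_bounds l1 l2 c th (psi t) G).
    set (rr := phi_rhs l1 l2 c th (psi t)) in *.
    match type of H2 with is_derive _ _ ?l => assert (E: l = 0) end.
    { unfold minus, scal, one, plus, opp; simpl. unfold mult; simpl. field. apply Rgt_not_eq; lra. }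
    rewrite E in H2. eapply is_derive_ext; [|exact H2]. intros; unfold minus, plus, opp; simpl. ring. }
  assert (h0: h 0 = 0) by (unfold h; rewrite H0, T_0; ring).
  assert (hu: h u = 0).
  { destruct (Rtotal_order u 0) as [Hu|[Hu|Hu]].
    - rewrite <- h0. apply (eq_is_derive h u 0); [intros; apply Hh | lra].
    - rewrite Hu. exact h0.
    - rewrite <- h0. symmetry. apply (eq_is_derive h 0 u); [intros; apply Hh | lra]. }
  unfold h in hu. lra.
Qed.

Lemma psi_T l1 l2 c th x : Good l1 l2 c th -> phi l1 l2 c th (Tf l1 l2 c th x) = x.
Proof.
  intros G. apply (T_inj l1 l2 c th); auto. apply T_psi; auto.
Qed.

Lemma Ucap_eq l1 l2 c th : Good l1 l2 c th -> Ucap l1 l2 c th = Tf l1 l2 c th PI.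
Proof.
  intros G. unfold Ucap.
  assert (Ex: exists U, 0 < U /\ phi l1 l2 c th U = PI).
  { exists (Tf l1 l2 c th PI). split.
    rewrite <- (T_0 l1 l2 c th). apply T_strict; auto. apply PI_RGT_0.
    apply psi_T; auto. }
  pose proof (epsilon_spec (inhabits 0) _ Ex) as [_ H].
  set (U := epsilon _ _) in *. rewrite <- (T_psi l1 l2 c th U G). rewrite H. reflexivity.
Qed.

Lemma cpt (f : R -> R) x : continuity_pt f x -> continuous f x.
Proof. intros H. apply continuity_pt_filterlim. exact H. Qed.
Lemma cpt' (f : R -> R) x : continuous f x -> continuity_pt f x.
Proof. intros H. apply continuity_pt_filterlim. exact H. Qed.

Lemma psi_cont l1 l2 c th u : Good l1 l2 c th -> continuity_pt (phi l1 l2 c th) u.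
Proof.
  intros G. apply cpt'. apply cont_of_ex_derive. destruct (psi_phi l1 l2 c th G) as [_ Hd].
  eexists; apply Hd.
Qed.

Lemma RInt_change l1 l2 c th (f : R -> R) : Good l1 l2 c th -> (forall u, continuity_pt f u) ->
  RInt f 0 (Tf l1 l2 c th PI) =
  RInt (fun y => / phi_rhs l1 l2 c th y * f (Tf l1 l2 c th y)) 0 PI.
Proof.
  intros G Hf.
  rewrite <- (T_0 l1 l2 c th) at 1.
  rewrite <- (RInt_comp f (Tf l1 l2 c th) (fun y => / phi_rhs l1 l2 c th y) 0 PI).
  reflexivity.
  intros; apply cpt; auto.
  intros x _. split. apply T_derive; auto. apply invr_cont; auto.
Qed.

Lemma Hfun_eq l1 l2 c th : Good l1 l2 c th ->
  Hfun l1 l2 c th = Gk l1 l2 c (cos th).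
Proof.
  intros G. pose proof G as [Hc Hl Hk Hq].
  unfold Hfun, ffun, Gfun. rewrite Ucap_eq by auto.
  assert (Bc: forall u, continuity_pt (Bfun l1 l2 c th) u).
  { intros u. unfold Bfun. apply (continuity_pt_comp (phi l1 l2 c th) (Bang l1 l2)).
    apply psi_cont; auto. apply cpt', cont_of_ex_derive, Bang_ex_derive. }
  assert (Bp: forall u, 0 < Bfun l1 l2 c th u).
  { intros u. unfold Bfun. pose proof (Bang_bounds l1 l2 (phi l1 l2 c th u) Hl). nra. }
  rewrite (RInt_change l1 l2 c th (fun s => Dc c th * Bfun l1 l2 c th s)) by
    (auto; intros; apply continuity_pt_mult; auto; apply continuity_pt_const; intros ? ?; auto).
  rewrite (RInt_change l1 l2 c th (fun s => (c - phi' l1 l2 c th s) / Bfun l1 l2 c th s)).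
  2: auto.
  2: { intros u. apply continuity_pt_div; auto.
       apply continuity_pt_minus. apply continuity_pt_const; intros ? ?; auto.
       unfold phi'. apply (continuity_pt_comp (phi l1 l2 c th) (phi_rhs l1 l2 c th)).
       apply psi_cont; auto. apply cpt', r_cont; auto.
       apply Rgt_not_eq, Bp. }
  set (A := fun y => / phi_rhs l1 l2 c th y * (Dc c th * Bfun l1 l2 c th (Tf l1 l2 c th y))).
  set (Bf := fun y => / phi_rhs l1 l2 c th y * ((c - phi' l1 l2 c th (Tf l1 l2 c th y)) / Bfun l1 l2 c th (Tf l1 l2 c th y))).
  assert (eA: ex_RInt A 0 PI).
  { apply (@ex_RInt_continuous R_CompleteNormedModule). intros z _. unfold A.
    apply cpt. apply continuity_pt_mult. apply cpt', invr_cont; auto.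
    apply continuity_pt_mult. apply continuity_pt_const; intros ? ?; auto.
    apply (continuity_pt_comp (Tf l1 l2 c th) (Bfun l1 l2 c th)); auto.
    apply T_continuity; auto. }
  assert (eB: ex_RInt Bf 0 PI).
  { apply (@ex_RInt_continuous R_CompleteNormedModule). intros z _. unfold Bf.
    apply cpt. apply continuity_pt_mult. apply cpt', invr_cont; auto.
    apply (continuity_pt_comp (Tf l1 l2 c th) (fun s => (c - phi' l1 l2 c th s) / Bfun l1 l2 c th s)).
    apply T_continuity; auto.
    apply continuity_pt_div; auto.
    apply continuity_pt_minus. apply continuity_pt_const; intros ? ?; auto.
    unfold phi'. apply (continuity_pt_comp (phi l1 l2 c th) (phi_rhs l1 l2 c th)).
    apply psi_cont; auto. apply cpt', r_cont; auto.
    apply Rgt_not_eq, Bp. }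
  assert (Hsum: is_RInt (fun y => Dc c th * A y + c * Bf y) 0 PI (Dc c th * RInt A 0 PI + c * RInt Bf 0 PI)).
  { apply (is_RInt_plus (V := R_NormedModule) (fun y => Dc c th * A y) (fun y => c * Bf y));
    apply (is_RInt_scal (V := R_NormedModule)); apply (RInt_correct (V := R_CompleteNormedModule)); auto. }
  rewrite <- (is_RInt_unique _ _ _ _ Hsum).
  unfold Gk. apply RInt_ext. intros y _. unfold A, Bf, Bfun, phi'.
  rewrite psi_T by auto. rewrite r_eq by auto.
  pose proof (r_Q l1 l2 c th y G) as HQ.
  pose proof (Bang_bounds l1 l2 y Hl) as HB.
  assert (sp: 0 < sqrt (Qk c (cos th) (Bang l1 l2 y))) by (apply sqrt_lt_R0; lra).
  unfold Kk, Dc. pose proof (sc2 th).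
  replace ((1 - cos th ^2)) with (sin th ^2) by lra.
  match goal with |- ?a = ?b => change (@eq R a b) end. field. repeat split; try (apply Rgt_not_eq; lra). apply Rgt_not_eq; nra.
Qed.

Lemma sqrt2_gt1 : 1 < sqrt 2.
Proof.
  pose proof (sqrt_sqrt 2 ltac:(lra)). pose proof (sqrt_pos 2). nra.
Qed.

Lemma constr_good l1 c th : 0 < c -> 0 < l1 -> 0 < th < PI/2 -> th < theta_plus l1 c ->
  goodk l1 c (cos th).
Proof.
  intros Hc Hl Hth Htp. pose proof PI_RGT_0.
  assert (k0: 0 < cos th) by (apply cos_gt_0; lra).
  assert (k1: cos th < 1) by (rewrite <- cos_0; apply cos_decreasing_1; lra).
  split. lra.
  unfold theta_plus in Htp. destruct (Rlt_dec (sqrt 2 * l1) c).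
  - pose proof sqrt2_gt1. assert (l1 < c) by nra. nra.
  - assert (c^2 <= 2*l1^2).
    { assert (c <= sqrt 2 * l1) by lra. pose proof (sqrt_sqrt 2 ltac:(lra)).
      assert (c^2 <= (sqrt 2 * l1)^2) by (apply pow_incr; lra). nra. }
    set (y := 1 - c^2/l1^2) in *.
    assert (yb: -1 <= y <= 1).
    { unfold y. assert (0 <= c^2/l1^2 <= 2).
      { split. apply Rlt_le, Rdiv_lt_0_compat; nra.
        apply (Rmult_le_reg_r (l1^2)). nra. unfold Rdiv. rewrite Rmult_assoc, Rinv_l by nra. nra. }
      lra. }
    pose proof (acos_bound y).
    assert (y < cos th).
    { rewrite <- (cos_acos y) by auto. apply cos_decreasing_1; lra. }
    unfold y in H2.
    assert (c^2/l1^2*l1^2 = c^2) by (field; lra).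
    assert (0 < l1^2) by nra.
    assert ((c^2/l1^2 - (1 - cos th)) * l1^2 > 0) by (apply Rmult_lt_0_compat; lra).
    nra.
Qed.

Lemma good_acos l1 c k : 0 < c -> 0 < l1 -> goodk l1 c k ->
  0 < acos k < PI/2 /\ 0 < acos k < theta_plus l1 c /\ cos (acos k) = k.
Proof.
  intros Hc Hl [Hk Hq]. pose proof PI_RGT_0.
  pose proof (acos_bound_lt k ltac:(lra)).
  pose proof (cos_acos k ltac:(lra)) as Ec.
  assert (A: acos k < PI/2).
  { destruct (Rlt_le_dec (acos k) (PI/2)); auto.
    pose proof (cos_decr_1 (PI/2) (acos k) ltac:(lra) ltac:(lra) ltac:(lra) ltac:(lra) r).
    rewrite cos_PI2 in H1. lra. }
  split. lra. split; auto. split. lra.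
  unfold theta_plus. destruct (Rlt_dec (sqrt 2 * l1) c). lra.
  assert (c^2 <= 2*l1^2).
  { assert (c <= sqrt 2 * l1) by lra. pose proof (sqrt_sqrt 2 ltac:(lra)).
    assert (c^2 <= (sqrt 2 * l1)^2) by (apply pow_incr; lra). nra. }
  set (y := 1 - c^2/l1^2).
  assert (yb: -1 <= y <= 1).
  { unfold y. assert (0 <= c^2/l1^2 <= 2).
    { split. apply Rlt_le, Rdiv_lt_0_compat; nra.
      apply (Rmult_le_reg_r (l1^2)). nra. unfold Rdiv. rewrite Rmult_assoc, Rinv_l by nra. nra. }
    lra. }
  assert (yk: y < k).
  { unfold y. assert (c^2/l1^2*l1^2 = c^2) by (field; lra).
    apply (Rmult_lt_reg_r (l1^2)). nra. nra. }
  pose proof (acos_bound y).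
  apply cos_decreasing_0; try lra.
  rewrite cos_acos by auto. rewrite Ec. lra.
Qed.

Theorem lemma5p2 (l1 l2 : R)
  (hl : (l1 > l2 /\ l2 > 0) \/ (l1 = 1 /\ l2 = 1)) :
  forall c : R, 0 < c ->
  exists! th : R,
    (0 < th < PI / 2 /\ 0 < th < theta_plus l1 c) /\ Hfun l1 l2 c th = 0.
Proof.
  intros c Hc.
  assert (Hl: 0 < l2 <= l1) by (destruct hl; lra).
  assert (Hl1: 0 < l1) by lra.
  assert (GoodOf: forall th, goodk l1 c (cos th) -> Good l1 l2 c th).
  { intros th [Hk Hq]. constructor; auto; lra. }
  destruct (Gk_zero l1 l2 c Hc Hl) as [k [Gk0 Zk]].
  destruct (good_acos l1 c k Hc Hl1 Gk0) as [A1 [A2 A3]].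
  exists (acos k). split.
  - split. split; auto.
    rewrite Hfun_eq. rewrite A3. auto. apply GoodOf. rewrite A3. auto.
  - intros th' [[B1 B2] HB].
    assert (g': goodk l1 c (cos th')) by (apply constr_good; lra).
    rewrite Hfun_eq in HB by (apply GoodOf; auto).
    assert (Ek: cos th' = k).
    { destruct (Rtotal_order (cos th') k) as [H|[H|H]]; auto.
      - pose proof (Gk_decr l1 l2 c (cos th') k Hc Hl g' Gk0 H). lra.
      - pose proof (Gk_decr l1 l2 c k (cos th') Hc Hl Gk0 g' H). lra. }
    rewrite <- Ek. rewrite acos_cos; auto. pose proof PI_RGT_0. lra.
Qed.
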